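(* Let $n,p\ge1$ be integers and let $\mathbf{A}^{p+1}_{n+1}=\langle A;\odot,\Rightarrow,\wedge,\vee,\bot,\top\rangle$ be as defined in the context. Then: (i) $\langle A;\odot,\top\rangle$ is a commutative monoid; (ii) $\le$ is a lattice order on $A$ and $\langle A;\wedge,\vee,\bot,\top\rangle$ is a bounded distributive lattice with least element $\bot=\langle(n,0),0\rangle$ and greatest element $\top=\langle(n,0),p\rangle$; (iii) for all $a,b,c\in A$, $a\odot b\le c$ iff $a\le b\Rightarrow c$; (iv) $\mathbf{A}^{p+1}_{n+1}$ is involutive: for every $a\in A$, $(a\Rightarrow\bot)\Rightarrow\bot=a$.
   Context: Order $\mathbb{Z}\times\mathbb{Z}$ lexicographically: $(m,r)\preccurlyeq(k,s)$ iff $m<k$, or $m=k$ and $r\le s$; addition/subtraction of pairs is componentwise, and $\min,\max$ of pairs refer to $\preccurlyeq$. For an integer $n\ge1$ let $L^\omega_{n+1}=\{(m,r)\in\mathbb{Z}^2:(0,0)\preccurlyeq(m,r)\preccurlyeq(n,0)\}$ with $x\ast y=\max\{(0,0),x+y-(n,0)\}$ and $x\to y=\min\{(n,0),(n,0)-x+y\}$. For an integer $p\ge1$ let $L_{p+1}=\{0,1,\dots,p\}$ with $\alpha\ast\beta=\max\{0,\alpha+\beta-p\}$. Define $$A=A^{p+1}_{n+1}=\{\langle(m,r),\alpha\rangle:(m,r)\in L^\omega_{n+1},\ \alpha\in\{0,p\}\}\cup\{\langle(m,r),\alpha\rangle:(0,0)\preccurlyeq(m,r)\preccurlyeq(n-1,0),\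 0<\alpha<p\}.$$ Order: $\langle(m,r),\alpha\rangle\le\langle(k,s),\beta\rangle$ iff one of: (o1) $\alpha\neq0$, $\alpha\le\beta$ and $(m,r)\preccurlyeq(k,s)$; (o2) $\alpha=\beta=0$ and $(k,s)\preccurlyeq(m,r)$; (o3) $\alpha=0$, $\beta\ne0$ and $(n-1,0)\preccurlyeq(m+k,r+s)$. $\wedge,\vee$ denote meet and join for $\le$. Put $\bot=\langle(n,0),0\rangle$, $\top=\langle(n,0),p\rangle$. For $a=\langle(m,r),\alpha\rangle$, $b=\langle(k,s),\beta\rangle\in A$ define $a\odot b$ by: (P1) if $\alpha,\beta\ge1$ and $\alpha+\beta>p$: $a\odot b=\langle(m,r)\ast(k,s),\alpha+\beta-p\rangle$; (P2) if $\alpha,\beta\ge1$ and $\alpha+\beta\le p$: $a\odot b=\langle\min\{(n,0),(2n-(m+k+1),-(r+s))\},0\rangle$; (P3) if $\alpha\ge1$, $\beta=0$: $a\odot b=\langle(m,r)\to(k,s),0\rangle$, and if $\alpha=0$, $\beta\ge1$: $a\odot b=\langle(k,s)\to(m,r),0\rangle$; (P4) if $\alpha=\beta=0$: $a\odot b=\langle\min\{(n,0),(m+k+1,r+s)\},0\rangle$. Define $\sim\langle(m,r),\alpha\rangle=\langle(m,r),p-\alpha\rangle$ if $\alpha\in\{0,p\}$, and $\sim\langle(m,r),\alpha\rangle=\langle(n-1-m,-r),p-\alpha\rangle$ if $0<\alpha<p$. Define $a\Rightarrow b=\sim(a\odot\sim b)$. The algebra $\mathbf{A}^{p+1}_{n+1}$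 is $\langle A;\odot,\Rightarrow,\wedge,\vee,\bot,\top\rangle$. *)

(* Defs.v *)
From Stdlib Require Import ZArith Bool.
Open Scope bool_scope.
Open Scope Z_scope.

Definition pr := (Z * Z)%type.

Definition lexleb (x y : pr) : bool :=
  (fst x <? fst y) || ((fst x =? fst y) && (snd x <=? snd y)).
Definition lexle (x y : pr) : Prop := lexleb x y = true.

Definition padd (x y : pr) : pr := (fst x + fst y, snd x + snd y).
Definition psub (x y : pr) : pr := (fst x - fst y, snd x - snd y).
Definition lmin (x y : pr) : pr := if lexleb x y then x else y.
Definition lmax (x y : pr) : pr := if lexleb x y then y else x.

Section Alg.
Variables n p : Z.

Definition inLw (x : pr) : Prop := lexle (0,0) x /\ lexle x (n,0).

Definition pstar (x y : pr) : pr := lmax (0,0) (psub (padd x y) (n,0)).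
Definition parr (x y : pr) : pr := lmin (n,0) (padd (psub (n,0) x) y).

(** Elements <(m,r),alpha> are represented as ((m,r), alpha). *)
Definition elt := (pr * Z)%type.

Definition inA (a : elt) : Prop :=
  let (x, al) := a in
  (inLw x /\ (al = 0 \/ al = p)) \/
  (lexle (0,0) x /\ lexle x (n-1,0) /\ 0 < al < p).

Definition le (a b : elt) : Prop :=
  let (x, al) := a in let (y, be) := b in
  (al <> 0 /\ al <= be /\ lexle x y) \/
  (al = 0 /\ be = 0 /\ lexle y x) \/
  (al = 0 /\ be <> 0 /\ lexle (n-1,0) (padd x y)).

Definition bot : elt := ((n,0), 0).
Definition top : elt := ((n,0), p).

Definition odot (a b : elt) : elt :=
  let (x, al) := a in let (y, be) := b in
  if (1 <=? al) && (1 <=? be) then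
    if p <? al + be then (pstar x y, al + be - p)
    else (lmin (n,0) (2*n - (fst x + fst y + 1), - (snd x + snd y)), 0)
  else if (1 <=? al) then (parr x y, 0)
  else if (1 <=? be) then (parr y x, 0)
  else (lmin (n,0) (fst x + fst y + 1, snd x + snd y), 0).

Definition neg (a : elt) : elt :=
  let (x, al) := a in
  if (al =? 0) || (al =? p) then (x, p - al)
  else ((n - 1 - fst x, - snd x), p - al).

Definition imp (a b : elt) : elt := neg (odot a (neg b)).

Definition is_meet (a b m : elt) : Prop :=
  inA m /\ le m a /\ le m b /\
  forall x, inA x -> le x a -> le x b -> le x m.
Definition is_join (a b j : elt) : Prop :=
  inA j /\ le a j /\ le b j /\
  forall x, inA x -> le a x -> le b x -> le j x.
End Alg.

(* Main.v *)
Require Import Defs.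
From Stdlib Require Import ZArith Lia Bool Setoid.
Open Scope Z_scope.

Lemma trip (a b c d e f : Z) : a = d -> b = e -> c = f -> ((a,b),c) = ((d,e),f).
Proof. intros; subst; reflexivity. Qed.

Lemma lex_true a b c d : lexleb (a,b) (c,d) = true -> a < c \/ (a = c /\ b <= d).
Proof. unfold lexleb; simpl; intros; lia. Qed.
Lemma lex_false a b c d : lexleb (a,b) (c,d) = false -> c < a \/ (a = c /\ d < b).
Proof. unfold lexleb; simpl; intros; lia. Qed.
Lemma lexle_iff a b c d : lexle (a,b) (c,d) <-> a < c \/ (a = c /\ b <= d).
Proof. unfold lexle, lexleb; simpl; lia. Qed.

Ltac dall := repeat match goal with
 | a : elt |- _ => destruct a as [[? ?] ?]
 | a : pr |- _ => destruct a
 end.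
Ltac red0 := cbv beta iota delta [fst snd] in *.
Ltac unf := unfold imp, inA, inLw, le, odot, neg, pstar, parr, lmin, lmax, psub, padd, top, bot in *; red0.

Ltac conv E := first
 [ apply lex_true in E | apply lex_false in E
 | rewrite ?andb_true_iff, ?andb_false_iff, ?orb_true_iff, ?orb_false_iff,
     ?Z.leb_le, ?Z.leb_gt, ?Z.ltb_lt, ?Z.ltb_ge, ?Z.eqb_eq, ?Z.eqb_neq in E ].

Ltac splitif := repeat (match goal with
 | |- context [if ?b then _ else _] =>
    lazymatch b with context[if _ then _ else _] => fail | _ =>
      let E := fresh "E" in destruct b eqn:E; conv E end
 | H: context [if ?b then _ else _] |- _ =>
    lazymatch b with context[if _ then _ else _] => fail | _ =>
      let E := fresh "E" in destruct b eqn:E; conv E end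
 end; red0; try (exfalso; lia)).
Ltac fin := first [ apply trip; lia | lia ].
Ltac lexprop := repeat match goal with
 | H : context [lexle (_,_) (_,_)] |- _ => rewrite !lexle_iff in H
 | |- context [lexle (_,_) (_,_)] => rewrite !lexle_iff
 end.
Ltac crush := dall; unf; lexprop; splitif; lexprop; fin.

Lemma inA_cases n p m r al : 1 <= p -> inA n p ((m,r),al) ->
  (al = 0 /\ lexle (0,0) (m,r) /\ lexle (m,r) (n,0)) \/
  (al = p /\ lexle (0,0) (m,r) /\ lexle (m,r) (n,0)) \/
  (0 < al < p /\ lexle (0,0) (m,r) /\ lexle (m,r) (n-1,0)).
Proof. unfold inA, inLw, lexle, lexleb; red0; intros; lia. Qed.

Ltac splitA hp := repeat match goal with
 | H : inA _ _ ((?m,?r),?al) |- _ =>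
   apply (inA_cases _ _ m r al hp) in H;
   destruct H as [[? [? ?]]|[[? [? ?]]|[? [? ?]]]]; try subst al
 end.
Ltac crush2 hp := dall; splitA hp; unf; lexprop; splitif; lexprop; fin.

Definition meetE (n : Z) (a b : elt) : elt :=
 let (x,al) := a in let (y,be) := b in
 if (al =? 0) && (be =? 0) then (lmax x y, 0)
 else if al =? 0 then (lmax x (psub (n-1,0) y), 0)
 else if be =? 0 then (lmax y (psub (n-1,0) x), 0)
 else (lmin x y, if al <=? be then al else be).
Definition joinE (n : Z) (a b : elt) : elt :=
 let (x,al) := a in let (y,be) := b in
 if (al =? 0) && (be =? 0) then (lmin x y, 0)
 else if al =? 0 then (lmax y (psub (n-1,0) x), be)
 else if be =? 0 then (lmax x (psub (n-1,0) y), al)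
 else (lmax x y, if al <=? be then be else al).


Lemma le_refl (n p : Z) (hn : 1 <= n) (hp : 1 <= p) (a : elt) : inA n p a -> le n a a.
Proof. intros; unfold meetE, joinE in *; crush2 hp. Qed.

Lemma le_anti (n p : Z) (hn : 1 <= n) (hp : 1 <= p) (a b : elt) : inA n p a -> inA n p b -> le n a b -> le n b a -> a = b.
Proof. intros; unfold meetE, joinE in *; crush2 hp. Qed.

Lemma le_trans (n p : Z) (hn : 1 <= n) (hp : 1 <= p) (a b d : elt) : inA n p a -> inA n p b -> inA n p d -> le n a b -> le n b d -> le n a d.
Proof. intros; unfold meetE, joinE in *; crush2 hp. Qed.

Lemma bot_in (n p : Z) (hn : 1 <= n) (hp : 1 <= p) : inA n p (bot n).
Proof. intros; unfold meetE, joinE in *; crush2 hp. Qed.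

Lemma top_in (n p : Z) (hn : 1 <= n) (hp : 1 <= p) : inA n p (top n p).
Proof. intros; unfold meetE, joinE in *; crush2 hp. Qed.

Lemma bounds (n p : Z) (hn : 1 <= n) (hp : 1 <= p) (a : elt) : inA n p a -> le n (bot n) a /\ le n a (top n p).
Proof. intros; unfold meetE, joinE in *; crush2 hp. Qed.

Lemma meet_in (n p : Z) (hn : 1 <= n) (hp : 1 <= p) (a b : elt) : inA n p a -> inA n p b -> inA n p (meetE n a b).
Proof. intros; unfold meetE, joinE in *; crush2 hp. Qed.

Lemma join_in (n p : Z) (hn : 1 <= n) (hp : 1 <= p) (a b : elt) : inA n p a -> inA n p b -> inA n p (joinE n a b).
Proof. intros; unfold meetE, joinE in *; crush2 hp. Qed.

Lemma meet_l (n p : Z) (hn : 1 <= n) (hp : 1 <= p) (a b : elt) : inA n p a -> inA n p b -> le n (meetE n a b) a.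
Proof. intros; unfold meetE, joinE in *; crush2 hp. Qed.

Lemma meet_r (n p : Z) (hn : 1 <= n) (hp : 1 <= p) (a b : elt) : inA n p a -> inA n p b -> le n (meetE n a b) b.
Proof. intros; unfold meetE, joinE in *; crush2 hp. Qed.

Lemma join_l (n p : Z) (hn : 1 <= n) (hp : 1 <= p) (a b : elt) : inA n p a -> inA n p b -> le n a (joinE n a b).
Proof. intros; unfold meetE, joinE in *; crush2 hp. Qed.

Lemma join_r (n p : Z) (hn : 1 <= n) (hp : 1 <= p) (a b : elt) : inA n p a -> inA n p b -> le n b (joinE n a b).
Proof. intros; unfold meetE, joinE in *; crush2 hp. Qed.

Lemma meet_gl (n p : Z) (hn : 1 <= n) (hp : 1 <= p) (a b x : elt) : inA n p a -> inA n p b -> inA n p x -> le n x a -> le n x b -> le n x (meetE n a b).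
Proof. intros; unfold meetE, joinE in *; crush2 hp. Qed.

Lemma join_lu (n p : Z) (hn : 1 <= n) (hp : 1 <= p) (a b x : elt) : inA n p a -> inA n p b -> inA n p x -> le n a x -> le n b x -> le n (joinE n a b) x.
Proof. intros; unfold meetE, joinE in *; crush2 hp. Qed.

Lemma imp_in (n p : Z) (hn : 1 <= n) (hp : 1 <= p) (a b : elt) : inA n p a -> inA n p b -> inA n p (imp n p a b).
Proof. intros; unfold meetE, joinE in *; crush2 hp. Qed.

Lemma invol (n p : Z) (hn : 1 <= n) (hp : 1 <= p) (a : elt) : inA n p a -> imp n p (imp n p a (bot n)) (bot n) = a.
Proof. intros; unfold meetE, joinE in *; crush2 hp. Qed.

Lemma trip_iff (a b c d e f : Z) : ((a,b),c) = ((d,e),f) <-> a = d /\ b = e /\ c = f.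
Proof. split; [intros H; inversion H; auto | intros [? [? ?]]; subst; auto]. Qed.
Lemma le_bot (n p : Z) (hn : 1 <= n) (hp : 1 <= p) (x y : elt) : inA n p x -> inA n p y -> (le n x y <-> odot n p x (neg n p y) = bot n).
Proof. intros; dall; splitA hp; unf; lexprop; splitif; lexprop; rewrite ?trip_iff; lia. Qed.
Lemma neg_neg (n p : Z) (hn : 1 <= n) (hp : 1 <= p) (x : elt) : inA n p x -> neg n p (neg n p x) = x.
Proof. intros; crush2 hp. Qed.
Lemma neg_in (n p : Z) (hn : 1 <= n) (hp : 1 <= p) (x : elt) : inA n p x -> inA n p (neg n p x).
Proof. intros; crush2 hp. Qed.

Lemma comm (n p : Z) (hn : 1 <= n) (hp : 1 <= p) (a b : elt) : inA n p a -> inA n p b -> odot n p a b = odot n p b a.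
Proof. intros; unfold meetE, joinE in *; crush2 hp. Qed.

Lemma clos (n p : Z) (hn : 1 <= n) (hp : 1 <= p) (a b : elt) : inA n p a -> inA n p b -> inA n p (odot n p a b).
Proof. intros; unfold meetE, joinE in *; crush2 hp. Qed.

Lemma unit_top (n p : Z) (hn : 1 <= n) (hp : 1 <= p) (a : elt) : inA n p a -> odot n p a (top n p) = a.
Proof. intros; unfold meetE, joinE in *; crush2 hp. Qed.

Lemma assoc (n p : Z) (hn : 1 <= n) (hp : 1 <= p) (a b c : elt) : inA n p a -> inA n p b -> inA n p c -> odot n p (odot n p a b) c = odot n p a (odot n p b c).
Proof. intros; unfold meetE, joinE in *; crush2 hp. Qed.
Lemma resid (n p : Z) (hn : 1 <= n) (hp : 1 <= p) (a b c : elt) : inA n p a -> inA n p b -> inA n p c -> (le n (odot n p a b) c <-> le n a (imp n p b c)).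
Proof. intros Ha Hb Hc.
  assert (Hnc : inA n p (neg n p c)) by (apply neg_in; auto).
  assert (Hab : inA n p (odot n p a b)) by (apply clos; auto).
  assert (Hbn : inA n p (odot n p b (neg n p c))) by (apply clos; auto).
  rewrite (le_bot n p hn hp _ _ Hab Hc).
  rewrite (assoc n p hn hp a b (neg n p c) Ha Hb Hnc).
  unfold imp.
  rewrite (le_bot n p hn hp _ _ Ha (neg_in n p hn hp _ Hbn)).
  rewrite (neg_neg n p hn hp _ Hbn).
  tauto.
Qed.

Lemma distr (n p : Z) (hn : 1 <= n) (hp : 1 <= p) (a b d : elt) : inA n p a -> inA n p b -> inA n p d -> meetE n a (joinE n b d) = joinE n (meetE n a b) (meetE n a d).
Proof. intros; unfold meetE, joinE in *; crush2 hp. Qed.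

Lemma meetE_is (n p : Z) (hn : 1 <= n) (hp : 1 <= p) (a b : elt) : inA n p a -> inA n p b -> is_meet n p a b (meetE n a b).
Proof. intros. unfold is_meet. split; [|split; [|split]].
 - eapply meet_in; eauto.
 - eapply meet_l; eauto.
 - eapply meet_r; eauto.
 - intros; eapply meet_gl; eauto.
Qed.
Lemma joinE_is (n p : Z) (hn : 1 <= n) (hp : 1 <= p) (a b : elt) : inA n p a -> inA n p b -> is_join n p a b (joinE n a b).
Proof. intros. unfold is_join. split; [|split; [|split]].
 - eapply join_in; eauto.
 - eapply join_l; eauto.
 - eapply join_r; eauto.
 - intros; eapply join_lu; eauto.
Qed.
Lemma meet_uniq (n p : Z) (hn : 1 <= n) (hp : 1 <= p) (a b m : elt) : inA n p a -> inA n p b -> is_meet n p a b m -> m = meetE n a b.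
Proof. intros Ha Hb [Hm [H1 [H2 H3]]]. apply (le_anti n p hn hp); auto.
 - apply (meet_in n p hn hp); auto.
 - apply (meet_gl n p hn hp); auto.
 - apply H3; [apply (meet_in n p hn hp) | apply (meet_l n p hn hp) | apply (meet_r n p hn hp)]; auto.
Qed.
Lemma join_uniq (n p : Z) (hn : 1 <= n) (hp : 1 <= p) (a b m : elt) : inA n p a -> inA n p b -> is_join n p a b m -> m = joinE n a b.
Proof. intros Ha Hb [Hm [H1 [H2 H3]]]. apply (le_anti n p hn hp); auto.
 - apply (join_in n p hn hp); auto.
 - apply H3; [apply (join_in n p hn hp) | apply (join_l n p hn hp) | apply (join_r n p hn hp)]; auto.
 - apply (join_lu n p hn hp); auto.
Qed.
Theorem theorem3p1 (n p : Z) (hn : 1 <= n) (hp : 1 <= p) :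
  (* (i) <A; odot, top> is a commutative monoid *)
  (inA n p (top n p) /\
   (forall a b, inA n p a -> inA n p b -> inA n p (odot n p a b)) /\
   (forall a b c, inA n p a -> inA n p b -> inA n p c ->
      odot n p (odot n p a b) c = odot n p a (odot n p b c)) /\
   (forall a b, inA n p a -> inA n p b -> odot n p a b = odot n p b a) /\
   (forall a, inA n p a -> odot n p a (top n p) = a)) /\
  (* (ii) le is a lattice order; bounded distributive lattice with bot, top *)
  ((forall a, inA n p a -> le n a a) /\
   (forall a b, inA n p a -> inA n p b -> le n a b -> le n b a -> a = b) /\
   (forall a b c, inA n p a -> inA n p b -> inA n p c ->
      le n a b -> le n b c -> le n a c) /\
   (forall a b, inA n p a -> inA n p b ->
      (exists m, is_meet n p a b m) /\ (exists j, is_join n p a b j)) /\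
   (forall a b c d e f g, inA n p a -> inA n p b -> inA n p c ->
      is_join n p b c d -> is_meet n p a d e ->
      is_meet n p a b f -> is_meet n p a c g -> is_join n p f g e) /\
   inA n p (bot n) /\ inA n p (top n p) /\
   (forall a, inA n p a -> le n (bot n) a /\ le n a (top n p))) /\
  (* (iii) residuation *)
  ((forall a b, inA n p a -> inA n p b -> inA n p (imp n p a b)) /\
   (forall a b c, inA n p a -> inA n p b -> inA n p c ->
      (le n (odot n p a b) c <-> le n a (imp n p b c)))) /\
  (* (iv) involutivity *)
  (forall a, inA n p a -> imp n p (imp n p a (bot n)) (bot n) = a).
Proof.
  split; [|split; [|split]].
  - split; [apply (top_in n p hn hp); auto|].
    split; [intros; apply (clos n p hn hp); auto|].
    split; [intros; apply (assoc n p hn hp); auto|].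
    split; [intros; apply (comm n p hn hp); auto|].
    intros; apply (unit_top n p hn hp); auto.
  - split; [intros; apply (le_refl n p hn hp); auto|].
    split; [intros; eapply (le_anti n p hn hp); eauto|].
    split; [intros a0 b0 c0 Ha0 Hb0 Hc0 H10 H20; apply (le_trans n p hn hp a0 b0 c0); auto|].
    split; [intros; split; [eexists; apply (meetE_is n p hn hp); auto | eexists; apply (joinE_is n p hn hp); auto]|].
    split.
    { intros a b c d e f g Ha Hb Hc Hd He Hf Hg.
      pose proof (join_uniq n p hn hp b c d Hb Hc Hd) as Ed.
      assert (Hdin : inA n p d) by (destruct Hd; auto).
      pose proof (meet_uniq n p hn hp a d e Ha Hdin He) as Ee.
      pose proof (meet_uniq n p hn hp a b f Ha Hb Hf) as Ef.
      pose proof (meet_uniq n p hn hp a c g Ha Hc Hg) as Eg.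
      subst d e f g.
      rewrite (distr n p hn hp a b c Ha Hb Hc).
      apply (joinE_is n p hn hp); auto; [apply (meet_in n p hn hp) | apply (meet_in n p hn hp)]; auto. }
    split; [apply (bot_in n p hn hp); auto|].
    split; [apply (top_in n p hn hp); auto|].
    intros; apply (bounds n p hn hp); auto.
  - split; [intros; apply (imp_in n p hn hp); auto|].
    intros; apply (resid n p hn hp); auto.
  - intros; apply (invol n p hn hp); auto.
Qed.
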